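(* Let $d\le 4$ and let $A=(A_1,\dots,A_d)$ have a palindromic Ising model distribution on $\{0,1\}^d$. Then for every nonempty subset $M\subseteq\{1,\dots,d\}$, the marginal distribution of $(A_v)_{v\in M}$ is again a palindromic Ising model.
   Context: A distribution $p$ on $\{0,1\}^k$ with $p(a)>0$ for all $a$ is palindromic if $p(a)=p(\sim a)$ for all $a$, where $\sim a$ is the complement of $a$. Its log-linear interactions (effect coding) are $\lambda_b=2^{-k}\sum_{a}(-1)^{a\cdot b}\log p(a)$ for $b\in\{0,1\}^k$. It is an Ising model if $\lambda_b=0$ for all $b$ with $|b|=\sum_v b_v\ge3$, and a palindromic Ising model if it is both an Ising model and palindromic (equivalently an Ising model with uniform margins). *)

(* Defs.v *)
From HB Require Import structures.
From mathcomp Require Import all_boot all_order all_algebra.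
From mathcomp Require Import reals exp.
Set Implicit Arguments. Unset Strict Implicit. Unset Printing Implicit Defensive.
Import Order.TTheory GRing.Theory Num.Theory.
Local Open Scope ring_scope.

Definition config (T : finType) := {ffun T -> bool}.

Definition compl_config (T : finType) (a : {ffun T -> bool}) : {ffun T -> bool} :=
  [ffun v => ~~ a v].

Definition dotc (T : finType) (a b : {ffun T -> bool}) : nat :=
  (\sum_(v : T) ((a v && b v) : nat))%N.

Definition weight (T : finType) (b : {ffun T -> bool}) : nat :=
  (\sum_(v : T) (b v : nat))%N.

Definition pos_dist (R : realType) (T : finType) (p : {ffun T -> bool} -> R) : Prop :=
  (forall a, 0 < p a) /\ \sum_(a : {ffun T -> bool}) p a = 1.

Definition palindromic (R : realType) (T : finType) (p : {ffun T -> bool} -> R) : Prop :=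
  forall a, p a = p (compl_config a).

(* log-linear interactions (effect coding) *)
Definition interaction (R : realType) (T : finType) (p : {ffun T -> bool} -> R)
  (b : {ffun T -> bool}) : R :=
  (2 ^- #|T|) * \sum_(a : {ffun T -> bool}) (-1) ^+ (dotc a b) * ln (p a).

Definition ising (R : realType) (T : finType) (p : {ffun T -> bool} -> R) : Prop :=
  forall b : {ffun T -> bool}, (3 <= weight b)%N -> interaction p b = 0.

Definition palindromic_ising (R : realType) (T : finType) (p : {ffun T -> bool} -> R) : Prop :=
  [/\ pos_dist p, palindromic p & ising p].

Definition marginal (R : realType) (T : finType) (p : {ffun T -> bool} -> R) (M : {set T})
  (c : {ffun {v : T | v \in M} -> bool}) : R :=
  \sum_(a : {ffun T -> bool} | [forall v : {v : T | v \in M}, a (val v) == c v]) p a.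
Arguments marginal {R T} p M c.

(* Main.v *)
Require Import Defs.
From HB Require Import structures.
From mathcomp Require Import all_boot all_order all_algebra.
From mathcomp Require Import reals exp.
From mathcomp Require Import lra.
Set Implicit Arguments. Unset Strict Implicit. Unset Printing Implicit Defensive.
Import Order.TTheory GRing.Theory Num.Theory.
Local Open Scope ring_scope.

Section Aux.
Variable R : realType.

Lemma dotc_compl (T : finType) (a b : {ffun T -> bool}) :
  (dotc (compl_config a) b + dotc a b)%N = weight b.
Proof.
rewrite /dotc /weight -big_split /=; apply: eq_bigr => v _.
by rewrite /compl_config ffunE; case: (a v); case: (b v).
Qed.

Lemma interaction_odd (T : finType) (q : {ffun T -> bool} -> R) b :
  palindromic q -> odd (weight b) -> interaction q b = 0.
Proof.
move=> Hp Hodd; rewrite /interaction.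
set S := \sum_a _.
suff -> : S = 0 by rewrite mulr0.
have HS : S = - S.
  rewrite {1}/S (reindex_inj (h := @compl_config T)); last first.
    by move=> x y /ffunP H; apply/ffunP => v; have := H v; rewrite !ffunE => /negb_inj.
  rewrite /S -sumrN; apply: eq_bigr => a _.
  rewrite -Hp -mulNr; congr (_ * _).
  have Hw := dotc_compl a b.
  have H : (-1) ^+ dotc (compl_config a) b * (-1) ^+ dotc a b = - 1 :> R.
    by rewrite -exprD Hw -signr_odd Hodd expr1.
  have Hx : (-1) ^+ dotc a b * (-1) ^+ dotc a b = 1 :> R.
    by rewrite -expr2 sqrr_sign.
  move: H Hx; set x := (-1) ^+ dotc a b; set y := (-1) ^+ _.
  move=> H Hx; rewrite -[LHS]mulr1 -Hx mulrA H.
  by rewrite mulN1r.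
have : 2 * S = 0 by rewrite mulr2n mulrDl mul1r {2}HS subrr.
by move/eqP; rewrite mulf_eq0 pnatr_eq0 /= => /eqP.
Qed.

Lemma weight_le (T : finType) (b : {ffun T -> bool}) : (weight b <= #|T|)%N.
Proof.
rewrite /weight -sum1_card; apply: leq_sum => v _; exact: leq_b1.
Qed.

Lemma weight_full (T : finType) (b : {ffun T -> bool}) :
  weight b = #|T| -> forall v, b v.
Proof.
move=> Hw v; apply/negPn/negP => Hbv.
have : (weight b <= #|T|.-1)%N.
  rewrite /weight (bigD1 v) //= (negbTE Hbv) add0n.
  apply: (@leq_trans (\sum_(i | i != v) 1)%N).
    by apply: leq_sum => i _; exact: leq_b1.
  by rewrite sum1_card -(cardC1 v); apply: eq_leq; apply: eq_card.
rewrite Hw; have : (0 < #|T|)%N by apply/card_gt0P; exists v.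
by case: (#|T|) => [|n] //= _; rewrite ltnn.
Qed.


Definition restr (T : finType) (M : {set T}) (a : {ffun T -> bool}) :
  {ffun {v : T | v \in M} -> bool} := [ffun v => a (val v)].

Lemma restrP (T : finType) (M : {set T}) (a : {ffun T -> bool}) (c : {ffun {v : T | v \in M} -> bool}) :
  [forall v : {v : T | v \in M}, a (val v) == c v] = (c == restr M a).
Proof.
apply/idP/idP => [/forallP H|/eqP ->].
  by apply/eqP/ffunP => v; rewrite ffunE; apply/esym/eqP; exact: H.
by apply/forallP => v; rewrite ffunE.
Qed.

Lemma marginal_sum (T : finType) (q : {ffun T -> bool} -> R) (M : {set T}) :
  \sum_c marginal q M c = \sum_a q a.
Proof.
rewrite /marginal (eq_bigr _ (fun c _ => big_mkcond _ _)) /= exchange_big /=.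
apply: eq_bigr => a _; rewrite -big_mkcond /=.
by rewrite (big_pred1 (restr M a)) // => c; rewrite /= restrP.
Qed.

Lemma marginal_pos (T : finType) (q : {ffun T -> bool} -> R) (M : {set T}) (c : {ffun {v : T | v \in M} -> bool}) :
  (forall a, 0 < q a) -> 0 < marginal q M c.
Proof.
move=> Hq.
pose a0 := [ffun i => if insub i is Some v then c v else false] : {ffun T -> bool}.
have Ha0 : [forall v : {v : T | v \in M}, a0 (val v) == c v].
  by apply/forallP => v; rewrite ffunE valK.
rewrite /marginal (bigD1 a0) //=.
have : 0 <= \sum_(i : {ffun T -> bool} | [forall v : {v : T | v \in M}, i (val v) == c v] && (i != a0)) q i.
  by apply: sumr_ge0 => i _; apply: ltW.
have := Hq a0; lra.
Qed.

Lemma marginal_pal (T : finType) (q : {ffun T -> bool} -> R) (M : {set T}) :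
  palindromic q -> palindromic (marginal q M).
Proof.
move=> Hp c; rewrite /marginal (reindex_inj (h := @compl_config T)); last first.
  by move=> x y /ffunP H; apply/ffunP => v; have := H v; rewrite !ffunE => /negb_inj.
apply: eq_big => [a|a _]; last by rewrite -Hp.
apply/forallP/forallP => H v; have := H v; rewrite !ffunE.
  by move/eqP <-; rewrite negbK.
by move/eqP ->; rewrite negbK.
Qed.


Definition sfull (T : finType) (i : T) : {v : T | v \in [set: T]} :=
  exist _ i (in_setT i).

Lemma restr_full_inj (T : finType) : injective (@restr T [set: T]).
Proof.
move=> x y H; apply/ffunP => i.
by have := congr1 (fun f : {ffun {v : T | v \in [set: T]} -> bool} => f (sfull i)) H; rewrite /= !ffunE.
Qed.

Lemma full_case (T : finType) (q : {ffun T -> bool} -> R)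
  (b : {ffun {v : T | v \in [set: T]} -> bool}) :
  (forall v, b v) -> interaction q [ffun=> true] = 0 ->
  interaction (marginal q [set: T]) b = 0.
Proof.
rewrite /interaction => Hb H.
have Hs : \sum_a (-1) ^+ dotc a [ffun=> true] * ln (q a) = 0.
  by move/eqP: H; rewrite mulf_eq0 invr_eq0 expf_eq0 pnatr_eq0 andbF /= => /eqP.
rewrite (reindex (@restr T [set: T])); last first.
  exists (fun c : {ffun {v : T | v \in [set: T]} -> bool} => [ffun i => c (sfull i)] : {ffun T -> bool}) => [a _|c _].
    by apply/ffunP => i; rewrite !ffunE.
  apply/ffunP => v; rewrite !ffunE; by congr (c _); apply: val_inj.
apply/eqP; rewrite mulf_eq0; apply/orP; right; apply/eqP; apply: (etrans _ Hs); apply: eq_bigr => a _.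
congr (_ * ln _).
  congr (_ ^+ _); rewrite /dotc.
  rewrite (reindex (@sfull T)) /=; last first.
    exists val => [i _|v _] //; exact: val_inj.
  by apply: eq_bigr => i _; rewrite !ffunE Hb andbT.
rewrite /marginal (big_pred1 a) // => x; rewrite /= restrP.
apply/eqP/eqP => [/restr_full_inj -> //|->//].
Qed.

End Aux.

Theorem proposition5p2 (R : realType) (d : nat) (p : {ffun 'I_d -> bool} -> R) :
  (d <= 4)%N ->
  palindromic_ising p ->
  forall M : {set 'I_d}, M != set0 ->
  palindromic_ising (marginal p M).
Proof.
move=> Hd [[Hpos Hsum] Hpal Hising] M HM.
split.
- split; [move=> c; exact: marginal_pos | by rewrite marginal_sum].
- exact: marginal_pal.
move=> b Hw.
case Ho: (odd (weight b)); first by apply: interaction_odd => //; apply: marginal_pal.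
have Hle := weight_le b.
have HcM : (#|{: {v : 'I_d | v \in M}}| <= d)%N.
  by rewrite card_sig -[X in (_ <= X)%N](card_ord d); apply: max_card.
have Hw4 : weight b = 4%N.
  move: Hw Ho (leq_trans Hle (leq_trans HcM Hd)).
  by case: (weight b) => [|[|[|[|[|n]]]]].
have Hc4 : #|{: {v : 'I_d | v \in M}}| = 4%N.
  by apply/eqP; rewrite eqn_leq (leq_trans HcM Hd) -Hw4 Hle.
have Hd4 : d = 4%N.
  by apply/eqP; rewrite eqn_leq Hd -Hc4 HcM.
have HMT : M = [set: 'I_d].
  apply/eqP; rewrite eqEcard subsetT cardsT card_ord.
  apply: (leq_trans (eq_leq Hd4)); rewrite -{1}Hc4 card_sig; apply: eq_leq; apply: eq_card.
by []. clear HM; move: b Hw Ho Hle Hw4 Hc4 HcM; rewrite HMT => b Hw Ho Hle Hw4 Hc4 HcM.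
apply: full_case.
  by apply: weight_full; rewrite Hw4 Hc4.
apply: Hising.
rewrite /weight (eq_bigr (fun _ => 1%N)) ?sum1_card ?card_ord ?Hd4 //.
by move=> i _; rewrite ffunE.
Qed.
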